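(* For any graph $G$ with no isolated vertex, order $n$ and maximum degree $\Delta$, $$\left\lceil\frac{2n+\gamma_t(G)}{\Delta+1}\right\rceil\le\gamma_{(2,2,1)}(G)\le\min\{3\gamma(G),2\gamma_t(G)\}.$$ Furthermore, if $G$ has minimum degree $\delta\ge2$, then $\gamma_{(2,2,1)}(G)\le\gamma_{\times2,t}(G)$.
   Context: All graphs are finite and simple; $N(v)$ is the open neighbourhood. $\gamma_{(2,2,1)}(G)$ is the minimum of $\sum_v f(v)$ over functions $f:V(G)\to\{0,1,2\}$ such that $\sum_{u\in N(v)}f(u)\ge 2$ whenever $f(v)\in\{0,1\}$ and $\sum_{u\in N(v)}f(u)\ge1$ whenever $f(v)=2$. $\gamma(G)$ is the domination number, $\gamma_t(G)$ the total domination number (minimum size of $S$ such that every vertex has a neighbour in $S$), and $\gamma_{\times2,t}(G)$ the minimum size of $S\subseteq V(G)$ such that every vertex has at least two neighbours in $S$. *)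

(* Defs.v *)
From mathcomp Require Import all_boot all_order.
Set Implicit Arguments. Unset Strict Implicit. Unset Printing Implicit Defensive.

(* A finite simple graph: vertex type T (finType), adjacency e : rel T,
   assumed symmetric and irreflexive in the theorem. *)
Section Graph.
Variables (T : finType) (e : rel T).

Definition nbhd (v : T) : {set T} := [set u | e v u].
Definition deg (v : T) : nat := #|nbhd v|.
Definition maxdeg : nat := \max_(v : T) deg v.

Definition weight (f : {ffun T -> 'I_3}) : nat := \sum_(v : T) (f v : nat).
Definition nsum (f : {ffun T -> 'I_3}) (v : T) : nat :=
  \sum_(u in nbhd v) (f u : nat).
Definition is_221_fun (f : {ffun T -> 'I_3}) : bool :=
  [forall v, if (f v : nat) == 2 then 1 <= nsum f v else 2 <= nsum f v].

(* Minimum over all valid objects; the default value is only used if no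
   valid object exists, which never happens under the theorem's hypotheses. *)
Definition gamma221 : nat :=
  \big[minn/(2 * #|T|).+1]_(f : {ffun T -> 'I_3} | is_221_fun f) weight f.

Definition is_dom (S : {set T}) : bool :=
  [forall v, (v \in S) || [exists u in S, e v u]].
Definition gamma : nat := \big[minn/#|T|.+1]_(S : {set T} | is_dom S) #|S|.

Definition is_tdom (S : {set T}) : bool :=
  [forall v, [exists u in S, e v u]].
Definition gamma_t : nat := \big[minn/#|T|.+1]_(S : {set T} | is_tdom S) #|S|.

Definition is_dtdom (S : {set T}) : bool :=
  [forall v, 2 <= #|nbhd v :&: S|].
Definition gamma_x2t : nat := \big[minn/#|T|.+1]_(S : {set T} | is_dtdom S) #|S|.

End Graph.

Definition ceil_div (a b : nat) : nat := (a + b.-1) %/ b.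

(* Main.v *)
Require Import Defs.
From mathcomp Require Import all_boot all_order.
From mathcomp Require Import zify.

Lemma bigmin_le (I : finType) (P : pred I) (F : I -> nat) d x :
  P x -> \big[minn/d]_(i | P i) F i <= F x.
Proof.
move=> Px; rewrite unlock; have : x \in index_enum I by rewrite mem_index_enum.
elim: (index_enum I) => //= a l IH; rewrite inE; case/orP=> [/eqP<-|xl].
  by rewrite Px geq_minl.
case: (P a); last exact: IH.
by rewrite geq_min IH // orbT.
Qed.

Lemma bigmin_eq (I : finType) (P : pred I) (F : I -> nat) d :
  (exists x0, P x0) -> (forall x, P x -> F x <= d) ->
  exists x, P x /\ \big[minn/d]_(i | P i) F i = F x.
Proof.
move=> [x0 Px0] Hd.
have : (exists x, P x /\ \big[minn/d]_(i | P i) F i = F x) \/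
       \big[minn/d]_(i | P i) F i = d.
  apply: (big_ind (fun m => (exists x, P x /\ m = F x) \/ m = d)).
  - by right.
  - move=> a b Ha Hb /=; case: (leqP a b) => ab.
    + by [].
    + by [].
  - by move=> i Pi; left; exists i.
case=> // Hb; exists x0; split => //.
apply/eqP; rewrite eqn_leq bigmin_le // Hb Hd //.
Qed.

Lemma card_sum (T : finType) (A : {set T}) : #|A| = \sum_(i : T) (i \in A : nat).
Proof. by rewrite -sum1_card [in LHS]big_mkcond big_mkcond /=; apply eq_bigr => i _; case: (i \in A). Qed.

Definition o0 : 'I_3 := @Ordinal 3 0 isT.
Definition o1 : 'I_3 := @Ordinal 3 1 isT.
Definition o2 : 'I_3 := @Ordinal 3 2 isT.

Lemma nsum_ge (T : finType) (e : rel T) (f : {ffun T -> 'I_3}) v u :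
  e v u -> (f u : nat) <= nsum e f v.
Proof. by move=> evu; rewrite /nsum (bigD1 u) ?inE //= leq_addr. Qed.

Arguments nsum_ge {T e} f {v u}.

Lemma nsum_pos (T : finType) (e : rel T) (f : {ffun T -> 'I_3}) v :
  0 < nsum e f v -> exists u, e v u && ((f u : nat) != 0).
Proof.
move=> pos; case: (boolP [exists u, e v u && ((f u : nat) != 0)]) => [/existsP//|/existsPn H].
move: pos; rewrite /nsum big1 // => u; rewrite inE => evu.
by move: (H u); rewrite evu /= negbK => /eqP.
Qed.

Arguments nsum_pos {T e f v}.

Lemma ceil_le a b w : a <= b.+1 * w -> ceil_div a b.+1 <= w.
Proof.
move=> H; rewrite /ceil_div /=.
apply: (@leq_trans ((w * b.+1 + b) %/ b.+1)).
  by apply: leq_div2r; rewrite mulnC leq_add2r.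
by rewrite divnMDl // divn_small // addn0.
Qed.

Lemma weight_le (T : finType) (f : {ffun T -> 'I_3}) : weight f <= (2 * #|T|).+1.
Proof.
apply: leqW; rewrite /weight mulnC -sum1_card big_distrl /=.
by apply: leq_sum => v _; rewrite mul1n -ltnS ltn_ord.
Qed.

Theorem theorem23 (T : finType) (e : rel T)
  (e_sym : symmetric e) (e_irr : irreflexive e)
  (no_isolated : forall v : T, exists u : T, e v u) :
  [/\ ceil_div (2 * #|T| + gamma_t e) (maxdeg e).+1 <= gamma221 e,
      gamma221 e <= minn (3 * gamma e) (2 * gamma_t e)
    & (forall v : T, 2 <= deg e v) -> gamma221 e <= gamma_x2t e].
Proof.
pose nb v := odflt v [pick u | e v u].
have Hnb v : e v (nb v).
  rewrite /nb; case: pickP => [u //|H]; case: (no_isolated v) => u evu.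
  by move: (H u); rewrite evu.
have Hcard (S : {set T}) : #|S| <= #|T|.+1 by apply: leqW; apply: max_card.
split.
-
  have [f [fv ->]] : exists f, is_221_fun e f /\ gamma221 e = weight f.
    apply: bigmin_eq; last by move=> f _; apply: weight_le.
    exists [ffun=> o2]; apply/forallP => v; rewrite ffunE /=.
    by apply: leq_trans _ (nsum_ge _ (Hnb v)); rewrite ffunE.
  have pos v : 0 < nsum e f v.
    move/forallP: fv => /(_ v); case: ifP => _ H; exact: leq_trans _ H.
  have Ht : gamma_t e <= \sum_v ((f v : nat) != 0).
    pose S := [set v | (f v : nat) != 0].
    have -> : \sum_v ((f v : nat) != 0) = #|S|.
      by rewrite card_sum; apply: eq_bigr => v _; rewrite inE.
    apply: bigmin_le; apply/forallP => v.
    case: (nsum_pos (pos v)) => u /andP [evu fu].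
    by apply/existsP; exists u; rewrite inE fu evu.
  have Hw : weight f = \sum_v ((f v : nat) != 0) + \sum_v ((f v : nat) == 2).
    rewrite /weight -big_split /=; apply: eq_bigr => v _.
    by case: (f v) => [[|[|[|]]]].
  have Hc : 2 * #|T| <= \sum_v nsum e f v + \sum_v ((f v : nat) == 2).
    rewrite mulnC -sum1_card big_distrl -big_split /=.
    apply: leq_sum => v _; rewrite mul1n.
    move/forallP: fv => /(_ v); case: ifP => [H2 H|_ H]; first by rewrite addn1.
    by rewrite addn0.
  have Hd : \sum_v nsum e f v <= weight f * maxdeg e.
    have -> : \sum_v nsum e f v = \sum_u (f u : nat) * deg e u.
      rewrite /nsum.
      under eq_bigr => v _ do rewrite big_mkcond /=.
      rewrite exchange_big /=; apply: eq_bigr => u _.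
      rewrite /deg card_sum big_distrr /=; apply: eq_bigr => v _.
      by rewrite !inE e_sym; case: (e u v); rewrite ?muln1 ?muln0.
    rewrite /weight big_distrl /=; apply: leq_sum => u _.
    by rewrite leq_mul2l leq_bigmax orbT.
  apply: ceil_le; lia.
- have Hg3 : gamma221 e <= 3 * gamma e.
    have [S [Sd ->]] : exists S, is_dom e S /\ gamma e = #|S|.
      apply: bigmin_eq => //; exists setT; apply/forallP => v; by rewrite in_setT.
    pose U := [set nb s | s in S].
    pose f := [ffun v => if v \in S then o2 else if v \in U then o1 else o0].
    apply: (@leq_trans (weight f)).
      apply: bigmin_le; apply/forallP => v; rewrite ffunE.
      case vS: (v \in S) => /=.
        apply: leq_trans _ (nsum_ge _ (Hnb v)).
        have : nb v \in U by apply: imset_f.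
        by rewrite ffunE => ->; case: (nb v \in S).
      have -> : ((if v \in U then o1 else o0) : nat) == 2 = false.
        by case: (v \in U).
      move/forallP: Sd => /(_ v); rewrite vS /= => /existsP [u /andP [uS evu]].
      by apply: leq_trans _ (nsum_ge _ evu); rewrite ffunE uS.
    apply: (@leq_trans (#|S| + #|S| + #|U|)); last first.
      have H : #|U| <= #|S| := leq_imset_card nb S; lia.
    rewrite !card_sum -!big_split /=; apply: leq_sum => v _; rewrite ffunE.
    by case: (v \in S); case: (v \in U).
  have Hg2 : gamma221 e <= 2 * gamma_t e.
    have [S [Sd ->]] : exists S, is_tdom e S /\ gamma_t e = #|S|.
      apply: bigmin_eq => //; exists setT; apply/forallP => v.
      by apply/existsP; exists (nb v); rewrite in_setT Hnb.
    pose f := [ffun v => if v \in S then o2 else o0].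
    apply: (@leq_trans (weight f)).
      apply: bigmin_le; apply/forallP => v.
      move/forallP: Sd => /(_ v) /existsP [u /andP [uS evu]].
      have H2 : 2 <= nsum e f v by apply: leq_trans _ (nsum_ge _ evu); rewrite ffunE uS.
      by case: ifP => _ //; apply: leq_trans _ H2.
    rewrite mul2n -addnn !card_sum -!big_split /= /weight.
    by apply: leq_sum => v _; rewrite ffunE; case: (v \in S).
  by rewrite leq_min Hg3 Hg2.
- move=> Hdeg.
  have [S [Sd ->]] : exists S, is_dtdom e S /\ gamma_x2t e = #|S|.
    apply: bigmin_eq => //; exists setT; apply/forallP => v.
    by rewrite setIT; apply: Hdeg.
  pose f := [ffun v => if v \in S then o1 else o0].
  apply: (@leq_trans (weight f)).
    apply: bigmin_le; apply/forallP => v.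
    have -> : nsum e f v = #|nbhd e v :&: S|.
      rewrite /nsum card_sum big_mkcond /=; apply: eq_bigr => u _.
      by rewrite ffunE in_setI; case: (u \in nbhd e v); case: (u \in S).
    have -> : ((f v : nat) == 2) = false by rewrite ffunE; case: (v \in S).
    by move/forallP: Sd => /(_ v).
  rewrite card_sum /weight; apply: leq_sum => v _; rewrite ffunE.
  by case: (v \in S).
Qed.
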